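(* Let $1\le p<\infty$, $X=\ell_p(\mathbb Z_+)$, and let $\mathbf u,\mathbf v$ be bounded sequences of non-zero scalars with $\inf_{n\ge1}|u_n|>0$ and $\inf_{n\ge1}|v_n|>0$. If the weighted backward shifts $B_{\mathbf u}$ and $B_{\mathbf v}$ are not similar, then they are orthogonal.
   Context: $(e_n)_{n\ge0}$ is the canonical basis of $\ell_p(\mathbb Z_+)$ (real or complex); $B_{\mathbf w}e_0=0$, $B_{\mathbf w}e_n=w_ne_{n-1}$. Operators $T_1,T_2$ are similar if $T_1=JT_2J^{-1}$ for some invertible bounded operator $J$ on $X$. They are orthogonal if any $T_1$-invariant and $T_2$-invariant Borel probability measures $m_1,m_2$ with $m_1(\{0\})=0=m_2(\{0\})$ are mutually singular. *)

(* Defs.v *)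
From HB Require Import structures.
From mathcomp Require Import all_boot all_order all_algebra.
From mathcomp Require Import all_classical all_reals all_analysis.
From mathcomp Require Import complex.
Set Implicit Arguments. Unset Strict Implicit. Unset Printing Implicit Defensive.
Import Order.TTheory GRing.Theory Num.Theory.
Local Open Scope ring_scope.
Local Open Scope classical_set_scope.

Definition scal (R : realType) (cplx : bool) : numFieldType :=
  if cplx then (R[i] : numFieldType) else (R : numFieldType).

Definition snorm (R : realType) (cplx : bool) : scal R cplx -> R :=
  match cplx return scal R cplx -> R with
  | true => fun z : R[i] => Num.sqrt (complex.Re z ^+ 2 + complex.Im z ^+ 2)
  | false => fun x : R => `|x|
  end.

Section Lp.
Variables (R : realType) (cplx : bool) (p : R).
Local Notation K := (scal R cplx).

Definition pw (t : R) : R := if t == 0 then 0 else t `^ p.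

Definition lpsum (x : nat -> K) : \bar R :=
  (\sum_(n <oo) (pw (snorm (x n)))%:E)%E.

Definition in_lp (x : nat -> K) : Prop := (lpsum x < +oo)%E.

Definition lpnorm (x : nat -> K) : R := fine (lpsum x) `^ p^-1.

Record lp := LP { lpseq : nat -> K; lpseqP : in_lp lpseq }.

Lemma in_lp0 : in_lp (fun _ => 0).
Proof.
rewrite /in_lp /lpsum eseries0 ?ltry // => n _ _.
have -> : snorm (0 : K) = 0.
  by case: cplx => /=; rewrite ?normr0 // expr0n /= addr0 sqrtr0.
by rewrite /pw eqxx.
Qed.

HB.instance Definition _ := gen_eqMixin lp.
HB.instance Definition _ := gen_choiceMixin lp.
HB.instance Definition _ := isPointed.Build lp (LP in_lp0).

Definition lpdist (x y : lp) : R := lpnorm (fun n => lpseq x n - lpseq y n).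

Definition lp_open : set (set lp) :=
  [set A | forall x, A x -> exists2 e : R, 0 < e & forall y, lpdist x y < e -> A y].

Definition lpBorel := g_sigma_algebraType lp_open.

Definition borel_prob := probability lpBorel R.

Definition invariant (T : lp -> lp) (m : borel_prob) : Prop :=
  forall A : set lpBorel, measurable A -> m (T @^-1` A) = m A.

Definition no_atom_at_0 (m : borel_prob) : Prop :=
  m [set x : lpBorel | forall n, lpseq x n = 0] = 0%E.

Definition mutually_singular (m1 m2 : borel_prob) : Prop :=
  exists2 A : set lpBorel, measurable A & m1 A = 0%E /\ m2 (~` A) = 0%E.

Definition ops_orthogonal (T1 T2 : lp -> lp) : Prop :=
  forall m1 m2 : borel_prob, invariant T1 m1 -> invariant T2 m2 ->
    no_atom_at_0 m1 -> no_atom_at_0 m2 -> mutually_singular m1 m2.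

Definition linear_op (J : lp -> lp) : Prop :=
  forall (a : K) (x y z : lp),
    (forall n, lpseq z n = a * lpseq x n + lpseq y n) ->
    forall n, lpseq (J z) n = a * lpseq (J x) n + lpseq (J y) n.

Definition bounded_op (J : lp -> lp) : Prop :=
  linear_op J /\ exists C : R, forall x, lpnorm (lpseq (J x)) <= C * lpnorm (lpseq x).

Definition ops_similar (T1 T2 : lp -> lp) : Prop :=
  exists J Jinv : lp -> lp, [/\ bounded_op J, bounded_op Jinv,
    cancel J Jinv, cancel Jinv J & forall x, T1 x = J (T2 (Jinv x))].

(* T is the weighted backward shift B_w : e_0 |-> 0, e_n |-> w_n e_(n-1),
   i.e. (B_w x)_n = w_(n+1) x_(n+1) *)
Definition is_wshift (w : nat -> K) (T : lp -> lp) : Prop :=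
  forall x n, lpseq (T x) n = w n.+1 * lpseq x n.+1.

End Lp.

(* Main.v *)
Require Import Defs.
From HB Require Import structures.
From mathcomp Require Import all_boot all_order all_algebra.
From mathcomp Require Import all_classical all_reals all_analysis.
From mathcomp Require Import complex.
From mathcomp Require Import ring lra.
Import Order.TTheory GRing.Theory Num.Theory.
Local Open Scope ring_scope.
Local Open Scope classical_set_scope.
Section S.
Variables (R : realType) (cplx : bool).
Local Notation K := (scal R cplx).
Lemma snormC (z : R[i]) : ((snorm (cplx:=true) z)%:C)%C = `|z|.
Proof. by rewrite normc_def. Qed.
Lemma snormCinj (a b : R) : (a%:C)%C = (b%:C)%C -> a = b.
Proof. by case. Qed.
Lemma snorm_ge0 (z : K) : 0 <= snorm z.
Proof. by case: cplx z => /= z; rewrite ?normr_ge0 ?sqrtr_ge0. Qed.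
Lemma snormM (a b : K) : snorm (a * b) = snorm a * snorm b.
Proof.
case: cplx a b => /= a b; last exact: normrM.
apply: snormCinj; rewrite rmorphM /= !snormC; exact: normrM.
Qed.
Lemma snormD (a b : K) : snorm (a + b) <= snorm a + snorm b.
Proof.
case: cplx a b => /= a b; last exact: ler_normD.
rewrite -lecR rmorphD /= !snormC; exact: ler_normD.
Qed.
Lemma snormN (a : K) : snorm (- a) = snorm a.
Proof.
case: cplx a => /= a; last exact: normrN.
apply: snormCinj; rewrite !snormC; exact: normrN.
Qed.
Lemma snorm_eq0 (a : K) : (snorm a == 0) = (a == 0).
Proof.
case: cplx a => /= a; first last. exact: normr_eq0.
apply/eqP/eqP => [H|->]; last by rewrite /= expr0n /= addr0 sqrtr0.
by apply/normr0_eq0; rewrite -snormC /= H.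
Qed.
Lemma snorm1 : snorm (1 : K) = 1.
Proof. by case: cplx => /=; rewrite ?normr1 // expr0n expr1n /= addr0 sqrtr1. Qed.
Variables (p : R) (hp : 1 <= p).
Lemma p_neq0 : p != 0%R. Proof. by apply: lt0r_neq0; apply: lt_le_trans hp. Qed.
Lemma pwE (t : R) : (0 <= t)%R -> pw p t = t `^ p.
Proof. by move=> _; rewrite /pw; case: eqP => [->|//]; rewrite powR0 // p_neq0. Qed.
Lemma pw_ge0 t : (0 <= pw p t)%R.
Proof. by rewrite /pw; case: eqP => // _; exact: powR_ge0. Qed.
Lemma term_le_lpsum (x : nat -> K) k : ((pw p (snorm (x k)))%:E <= lpsum p x)%E.
Proof.
rewrite /lpsum; apply: le_trans (nneseries_lim_ge k.+1 _) => [|n _ _]; last by rewrite lee_fin pw_ge0.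
rewrite big_nat_recr //= leeDr // sume_ge0 // => i _; by rewrite lee_fin pw_ge0.
Qed.
Lemma lpsum_ge0 (x : nat -> K) : (0 <= lpsum p x)%E.
Proof. by apply: nneseries_ge0 => n _ _; rewrite lee_fin pw_ge0. Qed.
Lemma coord_le_lpnorm (x : nat -> K) k : in_lp p x -> (snorm (x k) <= lpnorm p x)%R.
Proof.
move=> hx; have h0 := lpsum_ge0 x.
have hfin : lpsum p x = (fine (lpsum p x))%:E by rewrite fineK // ge0_fin_numE.
have h1 : (pw p (snorm (x k)) <= fine (lpsum p x))%R by rewrite -lee_fin -hfin term_le_lpsum.
rewrite /lpnorm; have hs := snorm_ge0 (x k).
have -> : snorm (x k) = (snorm (x k) `^ p) `^ p^-1.
  by rewrite -powRrM mulfV ?p_neq0 // powRr1.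
apply: ge0_ler_powR; rewrite ?nnegrE ?invr_ge0 ?powR_ge0 //.
  by apply: le_trans hp.
  by rewrite -lee_fin -hfin.
by rewrite -pwE.
Qed.
Lemma p_ge0 : (0 <= p)%R. Proof. by apply: le_trans hp. Qed.
Lemma pw_le {s t : R} : (0 <= s)%R -> (s <= t)%R -> (pw p s <= pw p t)%R.
Proof.
move=> s0 st; rewrite !pwE //; last exact: le_trans st.
by apply: ge0_ler_powR; rewrite ?nnegrE ?p_ge0 //; exact: le_trans st.
Qed.
Lemma pwM (s t : R) : (0 <= s)%R -> (0 <= t)%R -> pw p (s * t) = (pw p s * pw p t)%R.
Proof. by move=> s0 t0; rewrite !pwE ?mulr_ge0 // powRM. Qed.
Lemma pw_sub (a b : K) :
  (pw p (snorm (a - b)) <= 2 `^ p * (pw p (snorm a) + pw p (snorm b)))%R.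
Proof.
have sa := snorm_ge0 a; have sb := snorm_ge0 b.
have h1 : (snorm (a - b) <= 2 * Num.max (snorm a) (snorm b))%R.
  apply: (le_trans (snormD a (- b))); rewrite snormN mulr2n mulrDl mul1r.
  by apply: lerD; rewrite le_max lexx ?orbT.
have hh := pw_le (snorm_ge0 (a - b)) h1. apply: (le_trans hh).
rewrite pwM ?le_max ?sa // (@pwE 2 (ler0n _ 2)).
apply: ler_wpM2l; first exact: powR_ge0.
rewrite /Num.max; case: ifP => _.
  by rewrite lerDr pw_ge0.
by rewrite lerDl pw_ge0.
Qed.
Lemma in_lp_sub (x y : nat -> K) : in_lp p x -> in_lp p y -> in_lp p (fun n => x n - y n).
Proof.
rewrite /in_lp /lpsum => hx hy.
apply: le_lt_trans (lee_nneseries (v := fun n => ((2 `^ p)%:E * ((pw p (snorm (x n)))%:E + (pw p (snorm (y n)))%:E))%E) _ _) _.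
- by move=> n _ _; rewrite lee_fin pw_ge0.
- by move=> n _; rewrite -EFinD -EFinM lee_fin pw_sub.
rewrite nneseriesZl; last by move=> n _; rewrite adde_ge0 // lee_fin pw_ge0.
rewrite nneseriesD; try by move=> n _ _; rewrite lee_fin pw_ge0.
have fx : lpsum p x \is a fin_num by rewrite ge0_fin_numE // lpsum_ge0.
have fy : lpsum p y \is a fin_num by rewrite ge0_fin_numE // lpsum_ge0.
rewrite /lpsum in fx fy.
by rewrite -(fineK fx) -(fineK fy) -EFinD -EFinM ltry.
Qed.
Lemma coord_le_dist (x y : lp cplx p) k :
  (snorm (lpseq x k - lpseq y k) <= lpdist x y)%R.
Proof.
apply: (coord_le_lpnorm (fun n => lpseq x n - lpseq y n)).
apply: in_lp_sub; exact: lpseqP.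
Qed.
Lemma open_coord k c : @lp_open R cplx p [set x : lp cplx p | (c < snorm (lpseq x k))%R].
Proof.
move=> x /= hx; exists (snorm (lpseq x k) - c)%R; first by rewrite subr_gt0.
move=> y hy; have h := coord_le_dist x y k.
have h2 : (snorm (lpseq x k) <= snorm (lpseq x k - lpseq y k) + snorm (lpseq y k))%R.
  by apply: le_trans (snormD _ _); rewrite subrK.
rewrite /=; lra.
Qed.
Local Notation X := (@lpBorel R cplx p).
Lemma meas_coord k c : measurable [set x : X | (snorm (lpseq x k) <= c)%R].
Proof.
have -> : [set x : X | (snorm (lpseq x k) <= c)%R] = ~` [set x : X | (c < snorm (lpseq x k))%R].
  by rewrite predeqE => x /=; rewrite leNgt; split => [/negP|/negP].
apply: measurableC; apply: sub_gen_smallest; exact: open_coord.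
Qed.
Lemma meas_cs (K0 : nat) (g : nat -> nat) (w c : nat -> R) : (forall k, 0 < w k)%R ->
  measurable [set x : X | forall k, (k <= K0)%N -> (w k * snorm (lpseq x (g k)) <= c k)%R].
Proof.
move=> wpos.
have -> : [set x : X | forall k, (k <= K0)%N -> (w k * snorm (lpseq x (g k)) <= c k)%R] =
  \bigcap_(k in [set k | (k <= K0)%N]) [set x : X | (snorm (lpseq x (g k)) <= c k / w k)%R].
  rewrite predeqE => x; split => /= h k hk.
    by rewrite /= ler_pdivlMr // mulrC; exact: h.
  by have := h k hk; rewrite /= ler_pdivlMr // mulrC.
apply: bigcap_measurable; first by exists 0%N.
move=> k _; exact: meas_coord.
Qed.
Lemma snorm_prod n (F : nat -> K) : snorm (\prod_(i < n) F i) = (\prod_(i < n) snorm (F i))%R.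
Proof.
elim: n => [|n IH]; first by rewrite !big_ord0 snorm1.
by rewrite !big_ord_recr /= snormM IH.
Qed.
Definition Pc (w : nat -> K) k n := \prod_(i < n) w (k + i).+1.
Lemma Pc_gt0 (w : nat -> K) k n : (forall i, (0 < i)%N -> w i != 0) -> (0 < snorm (Pc w k n))%R.
Proof.
move=> hw; rewrite /Pc (snorm_prod n (fun i => w (k + i).+1)); apply: prodr_gt0 => i _.
by rewrite lt_def snorm_eq0 hw // snorm_ge0.
Qed.
Section Shift.
Variables (w : nat -> K) (B : lp cplx p -> lp cplx p) (hB : is_wshift w B).
Lemma iter_coord x n k : lpseq (iter n B x) k = Pc w k n * lpseq x (k + n).
Proof.
elim: n k => [|n IH] k; first by rewrite /Pc big_ord0 mul1r addn0.
rewrite /= hB IH /Pc big_ord_recl addn0 mulrA; congr (_ * _ * _).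
  by apply: eq_bigr => i _; rewrite lift0 addSnnS.
by rewrite addSnnS.
Qed.
Lemma inv_iter (m : borel_prob cplx p) (hinv : Defs.invariant B m) (A : set X) :
  (forall n, measurable (iter n B @^-1` A : set X)) -> forall n, m (iter n B @^-1` A : set X) = m A.
Proof.
move=> hA; elim => [//|n IH].
have -> : (iter n.+1 B @^-1` A : set X) = B @^-1` (iter n B @^-1` A).
  by rewrite predeqE => x; rewrite /preimage /= -iterSr.
by rewrite hinv.
Qed.
Definition CS (K0 : nat) (t : R) := [set x : X | forall k, (k <= K0)%N -> (snorm (lpseq x k) <= t)%R].
Lemma meas_CS_iter (hw : forall i, (0 < i)%N -> w i != 0) K0 t n : measurable (iter n B @^-1` CS K0 t : set X).
Proof.
have -> : (iter n B @^-1` CS K0 t : set X) = [set x : X | forall k, (k <= K0)%N ->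
   (snorm (Pc w k n) * snorm (lpseq x (k + n)) <= (fun=> t) k)%R].
  by rewrite predeqE => x; rewrite /preimage /CS /=; split => h k hk; have := h k hk; rewrite iter_coord snormM.
by apply: meas_cs => k; exact: Pc_gt0.
Qed.
End Shift.
Lemma small_zero (s : R) : (0 <= s)%R -> (forall j : nat, s <= (j.+1%:R)^-1)%R -> s = 0%R.
Proof.
move=> s0 h; apply/eqP; rewrite eq_le s0 andbT leNgt; apply/negP => spos.
set j := Num.Def.trunc s^-1.
have h1 : (s^-1 < j.+1%:R)%R by apply: truncnS_gt.
have h2 := h j.
have Npos : (0 < j.+1%:R :> R)%R by rewrite ltr0n.
have e1 : (s * j.+1%:R <= 1)%R.
  by apply: le_trans (ler_wpM2r (ltW Npos) h2) _; rewrite mulVf // lt0r_neq0.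
have e2 : (1 < s * j.+1%:R)%R.
  by rewrite -[X in (X < _)%R](mulfV (lt0r_neq0 spos)) ltr_pM2l.
by have := lt_le_trans e2 e1; rewrite ltxx.
Qed.
Lemma bound_exists (x : nat -> K) (j : nat) : exists N : nat, forall k, (k <= j)%N -> (snorm (x k) <= N.+1%:R)%R.
Proof.
elim: j => [|j [N hN]].
  exists (Num.Def.trunc (snorm (x 0%N))) => k; rewrite leqn0 => /eqP ->.
  by apply: ltW; apply: truncnS_gt.
exists (maxn N (Num.Def.trunc (snorm (x j.+1)))) => k; rewrite leq_eqVlt => /orP[/eqP ->|hk].
  apply: le_trans (ltW (truncnS_gt _)) _; rewrite ler_nat ltnS; exact: leq_maxr.
apply: le_trans (hN k hk) _; rewrite ler_nat ltnS; exact: leq_maxl.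
Qed.
Lemma meas_CS K0 t : measurable (CS K0 t).
Proof.
have -> : CS K0 t = [set x : X | forall k, (k <= K0)%N -> ((fun=> 1%R) k * snorm (lpseq x (id k)) <= (fun=> t) k)%R].
  by rewrite predeqE => x; rewrite /CS /=; split => h k hk; have := h k hk; rewrite mul1r.
by apply: meas_cs => k; exact: ltr01.
Qed.
Lemma CS_mono K0 s t : (s <= t)%R -> CS K0 s `<=` CS K0 t.
Proof. by move=> st x /= h k hk; apply: le_trans (h k hk) st. Qed.
Section Key.
Variables (u v : nat -> K) (Bu Bv : lp cplx p -> lp cplx p)
  (hBu : is_wshift u Bu) (hBv : is_wshift v Bv)
  (hu0 : forall i, (0 < i)%N -> u i != 0) (hv0 : forall i, (0 < i)%N -> v i != 0)
  (H : forall (K0 : nat) (eps : R), (0 < eps)%R -> exists n : nat,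
     forall k, (k <= K0)%N -> (snorm (Pc u k n) <= eps * snorm (Pc v k n))%R).
Variables (m1 m2 : borel_prob cplx p) (i1 : Defs.invariant Bu m1) (i2 : Defs.invariant Bv m2)
  (h0 : no_atom_at_0 m1).
Let d (j : nat) : R := (j.+1%:R)^-1.
Let d_gt0 j : (0 < d j)%R. Proof. by rewrite /d invr_gt0 ltr0n. Qed.
Let d_le j j' : (j <= j')%N -> (d j' <= d j)%R.
Proof. by move=> jj; rewrite /d lef_pV2 ?posrE ?ltr0n // ler_nat. Qed.
Let d_lt j : (d j.+1 < d j)%R.
Proof. by rewrite /d ltf_pV2 ?posrE ?ltr0n // ltr_nat. Qed.

Let F2 j : exists N : nat, (m2 (~` CS j N.+1%:R) < (d j - d j.+1)%:E)%E.
Proof.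
apply/not_existsP => hall.
pose T N := ~` CS j N.+1%:R.
have mT N : measurable (T N) by apply: measurableC; exact: meas_CS.
have cv : (m2 \o T) @ \oo --> m2 (\bigcap_N T N).
  apply: nonincreasing_cvg_mu => //.
  - by apply: le_lt_trans (probability_le1 _ (mT 0%N)) _; exact: ltry.
  - exact: bigcapT_measurable.
  - move=> a b ab; apply/subsetPset; apply: subsetC; apply: CS_mono.
    by rewrite ler_nat ltnS.
have E0 : \bigcap_N T N = set0.
  rewrite predeqE => x; split => // hx.
  have [N hN] := bound_exists (lpseq x) j.
  by have := hx N I; apply.
rewrite E0 measure0 in cv.
have : ((d j - d j.+1)%:E <= 0)%E.
  rewrite -(cvg_lim (@ereal_hausdorff R) cv).
  apply: lime_ge; first by apply/cvg_ex; eexists; exact: cv.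
  by apply: nearW => N /=; rewrite leNgt; apply/negP; exact: hall.
by rewrite lee_fin subr_le0 leNgt d_lt.
Qed.

Lemma key : exists2 A : set X, measurable A & m1 A = 0%E /\ m2 (~` A) = 0%E.
Proof.
have [NN hNN] := choice F2.
pose eps j := (d j / (NN j).+1%:R)%R.
have eps_gt0 j : (0 < eps j)%R by rewrite divr_gt0 ?ltr0n.
have F3 j : exists n : nat, forall k, (k <= j)%N -> (snorm (Pc u k n) <= eps j * snorm (Pc v k n))%R.
  exact: H.
have [nn hnn] := choice F3.
pose S j := CS j (d j).
pose E j := (iter (nn j) Bu @^-1` S j : set X).
have mE j : measurable (E j) by apply: meas_CS_iter.
have m1E j : m1 (E j) = m1 (S j).
  by apply: inv_iter => // n; exact: meas_CS_iter.
have incl j : ~` E j `<=` (iter (nn j) Bv @^-1` (~` CS j (NN j).+1%:R)).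
  move=> x /= hx hc; apply: hx => k hk.
  have := hc k hk; have := hnn j k hk.
  rewrite (iter_coord _ _ hBu) (iter_coord _ _ hBv) !snormM.
  set a := snorm (Pc u k _); set b := snorm (Pc v k _); set s := snorm (lpseq x _).
  move=> hab hbs.
  have s0 : (0 <= s)%R by exact: snorm_ge0.
  apply: le_trans (ler_wpM2r s0 hab) _.
  rewrite -mulrA; apply: le_trans (ler_wpM2l (ltW (eps_gt0 j)) hbs) _.
  by rewrite /eps mulfVK // lt0r_neq0 // ltr0n.
have m2E j : (m2 (~` E j) <= (d j - d j.+1)%:E)%E.
  apply: le_trans (le_measure _ _ _ (incl j)) _.
  - by rewrite inE; apply: measurableC.
  - rewrite inE -preimage_setC; apply: measurableC; exact: meas_CS_iter.
  have hm : forall n, measurable (iter n Bv @^-1` (~` CS j (NN j).+1%:R) : set X).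
    by move=> n; rewrite -preimage_setC; apply: measurableC; exact: meas_CS_iter.
  apply: le_trans (ltW (hNN j)); rewrite -(inv_iter _ _ i2 _ hm (nn j)); exact: lexx.
pose F J := \bigcap_(j in [set j | (J <= j)%N]) E j.
have mF J : measurable (F J) by apply: bigcap_measurable => //; exists J => /=.
pose A := \bigcup_J F J.
have mA : measurable A := bigcupT_measurable _ mF.
exists A => //; split.
- have zS : \bigcap_j S j = [set x : X | forall n, lpseq x n = 0].
    rewrite predeqE => x; split.
    + move=> hx n; apply/eqP; rewrite -snorm_eq0; apply/eqP.
      apply: small_zero; first exact: snorm_ge0.
      move=> j; have h := hx (maxn n j) I n (leq_maxl _ _).
      apply: (le_trans h); exact: (d_le _ _ (leq_maxr n j)).
    + move=> hx j _ k _; rewrite hx.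
      have /eqP -> : snorm (0 : K) == 0 by rewrite snorm_eq0.
      exact: ltW (d_gt0 j).
  have cvS : (m1 \o S) @ \oo --> m1 (\bigcap_j S j).
    apply: nonincreasing_cvg_mu.
    - by apply: le_lt_trans (probability_le1 _ (meas_CS _ _)) _; exact: ltry.
    - by move=> j; exact: meas_CS.
    - by apply: bigcapT_measurable => j; exact: meas_CS.
    - move=> a b ab; apply/subsetPset => x /= h k hk.
      exact: le_trans (h k (leq_trans hk ab)) (d_le _ _ ab).
  rewrite zS h0 in cvS.
  have hF J : m1 (F J) = 0%E.
    apply/eqP; rewrite eq_le measure_ge0 andbT.
    rewrite -(cvg_lim (@ereal_hausdorff R) cvS).
    apply: lime_ge; first by apply/cvg_ex; eexists; exact: cvS.
    exists J => // j /= hj; rewrite -m1E.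
    apply: (le_measure _ (mem_set (mF J)) (mem_set (mE j))).
    by move=> x /(_ j hj).
  apply/eqP; rewrite eq_le measure_ge0 andbT.
  apply: le_trans (measure_sigma_subadditive m1 mF mA (@subset_refl _ A)) _.
  by rewrite eseries0 // => i _ _; exact: hF.
- have hb J : (m2 (~` A) <= (d J)%:E)%E.
    apply: le_trans (@measure_sigma_subadditive_tail _ _ _ m2 (~` A) (fun j => ~` E j) J _ _ _) _.
    - by move=> n; apply: measurableC; exact: mE n.
    - exact: measurableC.
    - move=> x /= hx.
      case: (pselect (exists2 n, (~` `I_J) n & (~` E n) x)) => [[n h1 h2]|hn]; first by exists n.
      exfalso; apply: hx; exists J => // n /= hn'; apply: contrapT => hE; apply: hn; exists n => //=.
      by rewrite /= ltnNge hn'.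
    apply: le_trans (@lee_nneseries _ _ (fun n => (d n - d n.+1)%:E) xpredT J _ _) _.
    - by move=> n _ _; exact: measure_ge0.
    - by move=> n _; exact: m2E.
    apply: lime_le; first by apply: is_cvg_nneseries => n _ _; rewrite lee_fin subr_ge0 ltW ?d_lt.
    exists J => // N /= hN; rewrite sumEFin lee_fin (telescope_sumr_eq (fun k => - d k)) //.
      by have := d_gt0 N; lra.
    by move=> k _; rewrite opprK addrC.
  have fin : m2 (~` A) \is a fin_num.
    by rewrite ge0_fin_numE ?measure_ge0 //; apply: le_lt_trans (hb 0%N) (ltry _).
  rewrite -(fineK fin); congr (_%:E); apply: small_zero; first exact: fine_ge0 (measure_ge0 _ _).
  by move=> j; rewrite -lee_fin fineK //; exact: hb j.
Qed.
End Key.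
Lemma lp_ext (x y : lp cplx p) : (forall n, lpseq x n = lpseq y n) -> x = y.
Proof.
case: x => fx hx; case: y => fy hy /= h.
have E : fx = fy by apply: funext.
subst fy; congr LP; exact: Prop_irrelevance.
Qed.
Section Mul.
Variables (e : nat -> K) (L : R) (hL0 : (0 <= L)%R) (hL : forall n, (snorm (e n) <= L)%R).
Lemma lpsum_mul (x : nat -> K) : (lpsum p (fun n => (e n * x n)%R) <= (pw p L)%:E * lpsum p x)%E.
Proof.
rewrite /lpsum -nneseriesZl; last by move=> n _; rewrite lee_fin pw_ge0.
apply: lee_nneseries => [n _ _|n _]; first by rewrite lee_fin pw_ge0.
rewrite -EFinM lee_fin snormM pwM ?snorm_ge0 //.
by apply: ler_wpM2r; [exact: pw_ge0 | apply: pw_le; [exact: snorm_ge0|exact: hL]].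
Qed.
Lemma in_lp_mul (x : nat -> K) : in_lp p x -> in_lp p (fun n => e n * x n).
Proof.
move=> hx; apply: le_lt_trans (lpsum_mul x) _.
have fx : lpsum p x \is a fin_num by rewrite ge0_fin_numE // lpsum_ge0.
by rewrite -(fineK fx) -EFinM ltry.
Qed.
Definition mulop (x : lp cplx p) : lp cplx p := LP (in_lp_mul _ (lpseqP x)).
Lemma mulop_bounded : Defs.bounded_op mulop.
Proof.
split.
  by move=> a x y z hz n /=; rewrite hz mulrDr mulrCA.
exists L => x; rewrite /lpnorm /=.
have h0 := lpsum_ge0 (lpseq x).
have h1 := lpsum_ge0 (fun n => e n * lpseq x n).
have fx : lpsum p (lpseq x) \is a fin_num by rewrite ge0_fin_numE //; exact: lpseqP.
have fex : lpsum p (fun n => e n * lpseq x n) \is a fin_num.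
  by rewrite ge0_fin_numE //; exact: in_lp_mul _ (lpseqP x).
have hle : (fine (lpsum p (fun n => e n * lpseq x n)) <= pw p L * fine (lpsum p (lpseq x)))%R.
  by rewrite -lee_fin EFinM !fineK //; exact: lpsum_mul.
have pi0 : (0 <= p^-1)%R by rewrite invr_ge0 p_ge0.
apply: le_trans (ge0_ler_powR pi0 _ _ hle) _; rewrite ?nnegrE ?fine_ge0 ?mulr_ge0 ?pw_ge0 //; first exact: fine_ge0 h0.
have f0 := fine_ge0 h0. rewrite powRM ?pw_ge0 ?fine_ge0 // pwE // -powRrM mulfV ?p_neq0 // powRr1 //.
Qed.
End Mul.
Definition prodA (a : nat -> R) k n := (\prod_(i < n) a (k + i).+1)%R.
Lemma snorm_Pc (w : nat -> K) k n : snorm (Pc w k n) = prodA (fun i => snorm (w i)) k n.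
Proof. by rewrite /Pc (snorm_prod n (fun i => w (k + i).+1)). Qed.
Lemma prodA_split a k n : prodA a 0 (k + n) = (prodA a 0 k * prodA a k n)%R.
Proof.
rewrite /prodA big_split_ord; congr (_ * _)%R; apply: eq_bigr => i _ //=.
Qed.
Lemma prodA_ge0 a k n : (forall i, (0 < i)%N -> 0 <= a i)%R -> (0 <= prodA a k n)%R.
Proof. by move=> h; apply: prodr_ge0 => i _; exact: h. Qed.
Lemma prodA_le a M k n : (forall i, (0 < i)%N -> 0 <= a i <= M)%R -> (prodA a k n <= M ^+ n)%R.
Proof.
move=> h; elim: n => [|n IH]; first by rewrite /prodA big_ord0 expr0.
rewrite /prodA big_ord_recr /= exprSr; apply: ler_pM => //.
- by apply: prodr_ge0 => i _; have /andP[] := h (k + i).+1 isT.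
- by have /andP[] := h (k + n).+1 isT.
- by have /andP[] := h (k + n).+1 isT.
Qed.
Lemma prodA_ge a c k n : (0 <= c)%R -> (forall i, (0 < i)%N -> c <= a i)%R -> (c ^+ n <= prodA a k n)%R.
Proof.
move=> c0 h; elim: n => [|n IH]; first by rewrite /prodA big_ord0 expr0.
rewrite /prodA big_ord_recr /= exprSr; apply: ler_pM => //.
- exact: exprn_ge0.
- exact: h.
Qed.
Lemma realH (a b : nat -> R) cu Mu cv Mv : (0 < cu)%R -> (0 < cv)%R ->
  (forall i, (0 < i)%N -> cu <= a i <= Mu)%R -> (forall i, (0 < i)%N -> cv <= b i <= Mv)%R ->
  (forall eps, (0 < eps)%R -> exists n, (prodA a 0 n <= eps * prodA b 0 n)%R) ->
  forall (K0 : nat) (eps : R), (0 < eps)%R -> exists n : nat,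
     forall k, (k <= K0)%N -> (prodA a k n <= eps * prodA b k n)%R.
Proof.
move=> cu0 cv0 ha hb hr K0 eps eps0.
have ha0 i : (0 < i)%N -> (0 <= a i <= Mu)%R.
  by move=> hi; have /andP[h1 h2] := ha i hi; rewrite h2 andbT; apply: le_trans (ltW cu0) h1.
have hb0 i : (0 < i)%N -> (0 <= b i <= Mv)%R.
  by move=> hi; have /andP[h1 h2] := hb i hi; rewrite h2 andbT; apply: le_trans (ltW cv0) h1.
have cuMu : (cu <= Mu)%R by have /andP[h1 h2] := ha 1%N isT; exact: le_trans h1 h2.
have cvMv : (cv <= Mv)%R by have /andP[h1 h2] := hb 1%N isT; exact: le_trans h1 h2.
set E := (Mu / cu * (Mv / cv))%R.
have E1 : (1 <= E)%R.
  rewrite /E -[1%R]mulr1; apply: ler_pM => //.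
  by rewrite ler_pdivlMr // mul1r. by rewrite ler_pdivlMr // mul1r.
have EK0 : (0 < E ^+ K0)%R by apply: exprn_gt0; apply: lt_le_trans E1.
have [n hn] := hr (eps / E ^+ K0)%R (divr_gt0 eps0 EK0).
exists n => k hk.
set e' := (eps / E ^+ K0)%R.
have e'0 : (0 <= e')%R by rewrite ltW // divr_gt0.
set Akn := prodA a k n; set A0n := prodA a 0 n; set A0k := prodA a 0 k; set Ank := prodA a n k.
set Bkn := prodA b k n; set B0n := prodA b 0 n; set B0k := prodA b 0 k; set Bnk := prodA b n k.
have eA : (A0k * Akn = A0n * Ank)%R by rewrite -!prodA_split addnC.
have eB : (B0k * Bkn = B0n * Bnk)%R by rewrite -!prodA_split addnC.
have gA i j : (0 <= prodA a i j)%R by apply: prodA_ge0 => l hl; have /andP[] := ha0 l hl.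
have gB i j : (0 <= prodA b i j)%R by apply: prodA_ge0 => l hl; have /andP[] := hb0 l hl.
have h1 : (Akn * cu ^+ k <= A0n * Mu ^+ k)%R.
  apply: le_trans (_ : Akn * A0k <= _)%R.
    by apply: ler_wpM2l; [exact: gA | exact: prodA_ge (ltW cu0) (fun i hi => proj1 (andP (ha i hi)))].
  by rewrite mulrC eA; apply: ler_wpM2l; [exact: gA | exact: prodA_le].
have h2 : (B0n * cv ^+ k <= Bkn * Mv ^+ k)%R.
  apply: le_trans (_ : B0n * Bnk <= _)%R.
    by apply: ler_wpM2l; [exact: gB | exact: prodA_ge (ltW cv0) (fun i hi => proj1 (andP (hb i hi)))].
  by rewrite -eB mulrC; apply: ler_wpM2l; [exact: gB | exact: prodA_le].
have cuk : (0 < cu ^+ k)%R by exact: exprn_gt0.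
have cvk : (0 < cv ^+ k)%R by exact: exprn_gt0.
have Muk : (0 <= Mu ^+ k)%R by apply: exprn_ge0; exact: le_trans (ltW cu0) cuMu.
have Mvk : (0 <= Mv ^+ k)%R by apply: exprn_ge0; exact: le_trans (ltW cv0) cvMv.
have h3 : (Akn * (cu ^+ k * cv ^+ k) <= e' * Bkn * (Mu ^+ k * Mv ^+ k))%R.
  have s1 := ler_wpM2r (ltW cvk) h1.
  have s2 := ler_wpM2r (mulr_ge0 Muk (ltW cvk)) hn.
  have s3 := ler_wpM2l (mulr_ge0 e'0 Muk) h2.
  have t1 : (Akn * (cu ^+ k * cv ^+ k) = Akn * cu ^+ k * cv ^+ k)%R by rewrite mulrA.
  have t2 : (A0n * Mu ^+ k * cv ^+ k = A0n * (Mu ^+ k * cv ^+ k))%R by rewrite mulrA.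
  have t3 : (e' * B0n * (Mu ^+ k * cv ^+ k) = e' * Mu ^+ k * (B0n * cv ^+ k))%R by ring.
  have t4 : (e' * Mu ^+ k * (Bkn * Mv ^+ k) = e' * Bkn * (Mu ^+ k * Mv ^+ k))%R by ring.
  rewrite t1 -t4; apply: le_trans s1 _; rewrite t2; apply: le_trans s2 _; rewrite t3; exact: s3.
have ck0 : (0 < cu ^+ k * cv ^+ k)%R by exact: mulr_gt0.
have h4 : (Akn <= e' * Bkn * E ^+ k)%R.
  have -> : (E ^+ k = (Mu ^+ k * Mv ^+ k) / (cu ^+ k * cv ^+ k))%R.
    by rewrite /E exprMn !expr_div_n; field; apply/andP; split; apply: lt0r_neq0.
  by rewrite mulrA ler_pdivlMr.
apply: le_trans h4 _.
apply: le_trans (_ : e' * Bkn * E ^+ K0 <= _)%R.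
  apply: ler_wpM2l; first by apply: mulr_ge0 => //; exact: gB.
  exact: ler_weXn2l.
by rewrite /e' mulrAC divfK // lt0r_neq0.
Qed.
Lemma fld (F : fieldType) (a b s t y : F) : a != 0 -> b != 0 -> t != 0 ->
  s * y = b / a * (t * (a * s / (b * t) * y)).
Proof. by move=> a0 b0 t0; field; rewrite a0 b0 t0. Qed.
Lemma divK2 (a b : K) : a != 0 -> b != 0 -> a / b * (b / a) = 1.
Proof. by move=> a0 b0; rewrite mulrA divfK // mulfV. Qed.
Lemma Pc0S (w : nat -> K) n : Pc w 0 n.+1 = Pc w 0 n * w n.+1.
Proof. by rewrite /Pc big_ord_recr /= add0n. Qed.
Lemma similar_of_bounds (u v : nat -> K) (Bu Bv : lp cplx p -> lp cplx p)
  (hBu : is_wshift u Bu) (hBv : is_wshift v Bv)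
  (hu0 : forall i, (0 < i)%N -> u i != 0) (hv0 : forall i, (0 < i)%N -> v i != 0)
  (c C : R) : (0 < c)%R ->
  (forall n, c * prodA (fun i => snorm (v i)) 0 n <= prodA (fun i => snorm (u i)) 0 n)%R ->
  (forall n, prodA (fun i => snorm (u i)) 0 n <= C * prodA (fun i => snorm (v i)) 0 n)%R ->
  Defs.ops_similar Bu Bv.
Proof.
move=> c0 hc hC.
have Pu0 n : (0 < snorm (Pc u 0 n))%R by exact: Pc_gt0.
have Pv0 n : (0 < snorm (Pc v 0 n))%R by exact: Pc_gt0.
have Pun n : Pc u 0 n != 0 by rewrite -snorm_eq0 lt0r_neq0.
have Pvn n : Pc v 0 n != 0 by rewrite -snorm_eq0 lt0r_neq0.
pose d n := Pc v 0 n / Pc u 0 n.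
pose di n := Pc u 0 n / Pc v 0 n.
have sinv (z : K) : z != 0 -> snorm z^-1 = (snorm z)^-1.
  move=> z0; have : (snorm z^-1 * snorm z = 1)%R by rewrite -snormM mulVf // snorm1.
  move=> h; have nz : snorm z != 0%R by rewrite snorm_eq0.
  by apply: (mulIf nz); rewrite h mulVf.
have hd n : (snorm (d n) <= c^-1)%R.
  rewrite /d snormM sinv // !snorm_Pc ler_pdivrMr; last by rewrite -snorm_Pc.
  by rewrite ler_pdivlMl // mulrC; exact: hc.
have hdi n : (snorm (di n) <= C)%R.
  rewrite /di snormM sinv // !snorm_Pc ler_pdivrMr; last by rewrite -snorm_Pc.
  exact: hC.
have C0 : (0 <= C)%R.
  have := hC 0%N; rewrite /prodA !big_ord0 mulr1 => h; exact: le_trans ler01 h.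
exists (mulop d c^-1 hd), (mulop di C hdi); split.
- by apply: mulop_bounded; rewrite invr_ge0 ltW.
- exact: mulop_bounded.
- move=> x; apply: lp_ext => n /=; rewrite /d /di.
  by rewrite mulrA divK2 ?mul1r.
- move=> x; apply: lp_ext => n /=; rewrite /d /di.
  by rewrite mulrA divK2 ?mul1r.
move=> x; apply: lp_ext => n /=; rewrite hBu hBv /= /d /di !Pc0S.
have u1 := hu0 n.+1 isT; have v1 := hv0 n.+1 isT; have a1 := Pun n; have a2 := Pvn n.
exact: fld.
Qed.
End S.

Close Scope classical_set_scope.

Theorem corollary3p11 (R : realType) (cplx : bool) (p : R) (hp : 1 <= p)
    (u v : nat -> scal R cplx)
    (hu0 : forall n, (0 < n)%N -> u n != 0)
    (hv0 : forall n, (0 < n)%N -> v n != 0)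
    (hubd : exists M : R, forall n, (0 < n)%N -> snorm (u n) <= M)
    (hvbd : exists M : R, forall n, (0 < n)%N -> snorm (v n) <= M)
    (huinf : exists2 c : R, 0 < c & forall n, (0 < n)%N -> c <= snorm (u n))
    (hvinf : exists2 c : R, 0 < c & forall n, (0 < n)%N -> c <= snorm (v n))
    (Bu Bv : lp cplx p -> lp cplx p)
    (hBu : is_wshift u Bu) (hBv : is_wshift v Bv) :
  ~ ops_similar Bu Bv -> ops_orthogonal Bu Bv.
Proof.
move=> nsim m1 m2 i1 i2 h1 h2.
have [Mu hMu] := hubd; have [Mv hMv] := hvbd.
have [cu cu0 hcu] := huinf; have [cv cv0 hcv] := hvinf.
pose a := fun i => snorm (u i); pose b := fun i => snorm (v i).
have ha : forall i, (0 < i)%N -> cu <= a i <= Mu by move=> i hi; rewrite hcu ?hMu.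
have hb : forall i, (0 < i)%N -> cv <= b i <= Mv by move=> i hi; rewrite hcv ?hMv.
have Huv : (forall eps : R, 0 < eps -> exists n, prodA R a 0 n <= eps * prodA R b 0 n) ->
  forall (K0 : nat) (eps : R), 0 < eps -> exists n : nat, forall k, (k <= K0)%N ->
    snorm (Pc R cplx u k n) <= eps * snorm (Pc R cplx v k n).
  move=> hr K0 eps e0; have [n hn] := realH R a b cu Mu cv Mv cu0 cv0 ha hb hr K0 eps e0.
  by exists n => k hk; rewrite !snorm_Pc; exact: hn.
have Hvu : (forall eps : R, 0 < eps -> exists n, prodA R b 0 n <= eps * prodA R a 0 n) ->
  forall (K0 : nat) (eps : R), 0 < eps -> exists n : nat, forall k, (k <= K0)%N ->
    snorm (Pc R cplx v k n) <= eps * snorm (Pc R cplx u k n).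
  move=> hr K0 eps e0; have [n hn] := realH R b a cv Mv cu Mu cv0 cu0 hb ha hr K0 eps e0.
  by exists n => k hk; rewrite !snorm_Pc; exact: hn.
case: (pselect (forall eps : R, 0 < eps -> exists n, prodA R a 0 n <= eps * prodA R b 0 n)) => [hr|hr].
  have [A mA [hA1 hA2]] := key R cplx p hp u v Bu Bv hBu hBv hu0 hv0 (Huv hr) m1 m2 i1 i2 h1.
  by exists A.
case: (pselect (forall eps : R, 0 < eps -> exists n, prodA R b 0 n <= eps * prodA R a 0 n)) => [hr'|hr'].
  have [A mA [hA1 hA2]] := key R cplx p hp v u Bv Bu hBv hBu hv0 hu0 (Hvu hr') m2 m1 i2 i1 h2.
  exists (~` A)%classic; first exact: measurableC.
  by rewrite setCK.
exfalso; apply: nsim.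
move/existsNP: hr => [c /not_implyP [c0 /forallNP hc]].
move/existsNP: hr' => [c' /not_implyP [c'0 /forallNP hc']].
apply: (similar_of_bounds R cplx p hp u v Bu Bv hBu hBv hu0 hv0 c c'^-1 c0).
- move=> n; have := hc n; move=> h; apply: ltW; rewrite ltNge; apply/negP => h'.
  exact: h h'.
- move=> n; have := hc' n; move=> h.
  have h2' : c' * prodA R a 0 n < prodA R b 0 n.
    by rewrite ltNge; apply/negP => h'; exact: h h'.
  by rewrite ler_pdivlMl // ltW.
Qed.
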